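(* For every finite set $Q$, the category $\mathbf{Lam}_Q$ is cartesian closed and the quotient functor $\pi_Q \colon \mathbf{Lam} \to \mathbf{Lam}_Q$ (identity on objects, sending a term to its $\sim_Q$-class) is a cartesian closed functor. Moreover, every partial surjection $f \colon Q \twoheadrightarrow Q'$ between finite sets induces a cartesian closed identity-on-objects functor $\mathbf{Lam}_f \colon \mathbf{Lam}_Q \to \mathbf{Lam}_{Q'}$ such that $\mathbf{Lam}_f \circ \pi_Q = \pi_{Q'}$.
   Context: Simple types are built from a base type $o$ (with the type constructors of the simply typed $\lambda$-calculus, so that $\mathbf{Lam}$ is the free cartesian closed category on one object). $\Lambda(A)$ is the set of closed $\lambda$-terms of type $A$ modulo $\beta\eta$; $\mathbf{Lam}$ has simple types as objects and $\mathbf{Lam}(A,B) = \Lambda(A\Rightarrow B)$. For a finite set $Q$, $[\![-]\!]_Q$ is the standard interpretation in finite sets with $[\![o]\!]_Q = Q$ and $[\![A\Rightarrow B]\!]_Q$ all functions. For each type $A$, $M \sim_Q^A N$ iff $[\![M]\!]_Q = [\![N]\!]_Q$; these relations form a congruence on $\mathbf{Lam}$, and $\mathbf{Lam}_Q = \mathbf{Lam}/\sim_Q$, i.e. $\mathbf{Lam}_Q(A,B) = \Lambda(A\Rightarrow B)/\sim_Q^{A\Rightarrow B}$. A partial surjection $f\colon Q\twoheadrightarrow Q'$ is a relation that is the graph of a partial function surjective onto $Q'$. *)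

(* Defs.v *)
From Stdlib Require Import List RelationClasses.
From mathcomp Require Import all_boot.
Import ListNotations.
Set Implicit Arguments.
Unset Strict Implicit.

Inductive ty : Type := Base | One | Prod (A B : ty) | Arr (A B : ty).

Fixpoint var (G : list ty) (A : ty) : Type :=
  match G with
  | nil => Empty_set
  | B :: G' => ((B = A) + var G' A)%type
  end.

Inductive tm : list ty -> ty -> Type :=
| Var G A : var G A -> tm G A
| Lam G A B : tm (A :: G) B -> tm G (Arr A B)
| App G A B : tm G (Arr A B) -> tm G A -> tm G B
| Star G : tm G One
| Pair G A B : tm G A -> tm G B -> tm G (Prod A B)
| Fst G A B : tm G (Prod A B) -> tm G A
| Snd G A B : tm G (Prod A B) -> tm G B.

Arguments Var {G A}.
Arguments Lam {G A B}.
Arguments App {G A B}.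
Arguments Star {G}.
Arguments Pair {G A B}.
Arguments Fst {G A B}.
Arguments Snd {G A B}.

Definition ren (G D : list ty) := forall A, var G A -> var D A.

Definition ext_ren G D (r : ren G D) (B : ty) : ren (B :: G) (B :: D) :=
  fun A v => match v with
             | inl e => inl e
             | inr w => inr (r A w)
             end.
Arguments ext_ren {G D} r B.

Fixpoint rename G A (t : tm G A) : forall D, ren G D -> tm D A :=
  match t in tm G A return forall D, ren G D -> tm D A with
  | Var _ _ v => fun D r => Var (r _ v)
  | Lam G A B t => fun D r => Lam (rename t (ext_ren r A))
  | App _ _ _ t u => fun D r => App (rename t r) (rename u r)
  | Star _ => fun D r => Star
  | Pair _ _ _ t u => fun D r => Pair (rename t r) (rename u r)
  | Fst _ _ _ t => fun D r => Fst (rename t r)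
  | Snd _ _ _ t => fun D r => Snd (rename t r)
  end.

Definition wk_ren G B : ren G (B :: G) := fun A x => inr x.
Arguments wk_ren G B : clear implicits.

Definition wk G B A (M : tm G A) : tm (B :: G) A := rename M (wk_ren G B).

Definition vz G A : tm (A :: G) A := @Var (A :: G) A (inl (erefl A)).
Arguments vz G A : clear implicits.
Arguments wk {G} B {A} M.

Definition sub (G D : list ty) := forall A, var G A -> tm D A.

Definition exts G D (s : sub G D) (B : ty) : sub (B :: G) (B :: D) :=
  fun A v => match v with
             | inl e => @Var (B :: D) A (inl e)
             | inr w => rename (s A w) (wk_ren D B)
             end.
Arguments exts {G D} s B.

Fixpoint subst G A (t : tm G A) : forall D, sub G D -> tm D A :=
  match t in tm G A return forall D, sub G D -> tm D A with
  | Var _ _ v => fun D s => s _ v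
  | Lam G A B t => fun D s => Lam (subst t (exts s A))
  | App _ _ _ t u => fun D s => App (subst t s) (subst u s)
  | Star _ => fun D s => Star
  | Pair _ _ _ t u => fun D s => Pair (subst t s) (subst u s)
  | Fst _ _ _ t => fun D s => Fst (subst t s)
  | Snd _ _ _ t => fun D s => Snd (subst t s)
  end.

Definition subst1 G A (N : tm G A) : sub (A :: G) G :=
  fun C v => match v with
             | inl e => eq_rect A (tm G) N C e
             | inr w => Var w
             end.

Inductive bheq : forall G A, tm G A -> tm G A -> Prop :=
| be_refl G A (M : tm G A) : bheq M M
| be_sym G A (M N : tm G A) : bheq M N -> bheq N M
| be_trans G A (M N P : tm G A) : bheq M N -> bheq N P -> bheq M P
| be_lam G A B (M M' : tm (A :: G) B) : bheq M M' -> bheq (Lam M) (Lam M')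
| be_app G A B (M M' : tm G (Arr A B)) (N N' : tm G A) :
    bheq M M' -> bheq N N' -> bheq (App M N) (App M' N')
| be_pair G A B (M M' : tm G A) (N N' : tm G B) :
    bheq M M' -> bheq N N' -> bheq (Pair M N) (Pair M' N')
| be_fst G A B (M M' : tm G (Prod A B)) : bheq M M' -> bheq (Fst M) (Fst M')
| be_snd G A B (M M' : tm G (Prod A B)) : bheq M M' -> bheq (Snd M) (Snd M')
| be_beta G A B (M : tm (A :: G) B) (N : tm G A) :
    bheq (App (Lam M) N) (subst M (subst1 N))
| be_eta_arr G A B (M : tm G (Arr A B)) :
    bheq M (Lam (App (wk A M) (vz G A)))
| be_beta_fst G A B (M : tm G A) (N : tm G B) : bheq (Fst (Pair M N)) M
| be_beta_snd G A B (M : tm G A) (N : tm G B) : bheq (Snd (Pair M N)) N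
| be_eta_prod G A B (M : tm G (Prod A B)) : bheq M (Pair (Fst M) (Snd M))
| be_eta_one G (M : tm G One) : bheq M Star.

Fixpoint sem (Q : Type) (A : ty) : Type :=
  match A with
  | Base => Q
  | One => unit
  | Prod A B => (sem Q A * sem Q B)%type
  | Arr A B => sem Q A -> sem Q B
  end.

Fixpoint env (Q : Type) (G : list ty) : Type :=
  match G with
  | nil => unit
  | A :: G' => (sem Q A * env Q G')%type
  end.

Fixpoint lookup (Q : Type) (G : list ty) (A : ty) : var G A -> env Q G -> sem Q A :=
  match G return var G A -> env Q G -> sem Q A with
  | nil => fun v _ => match v with end
  | B :: G' => fun v e =>
      match v with
      | inl h => eq_rect B (sem Q) (fst e) A h
      | inr w => lookup w (snd e)
      end
  end.

Fixpoint eval (Q : Type) G A (t : tm G A) : env Q G -> sem Q A :=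
  match t in tm G A return env Q G -> sem Q A with
  | Var _ _ v => fun e => lookup v e
  | Lam _ _ _ t => fun e x => eval t (x, e)
  | App _ _ _ t u => fun e => (eval t e) (eval u e)
  | Star _ => fun _ => tt
  | Pair _ _ _ t u => fun e => (eval t e, eval u e)
  | Fst _ _ _ t => fun e => fst (eval t e)
  | Snd _ _ _ t => fun e => snd (eval t e)
  end.

Definition interp (Q : Type) A (M : tm nil A) : sem Q A := eval (Q := Q) M tt.

Definition simQ (Q : finType) A (M N : tm nil A) : Prop :=
  interp (Finite.sort Q) M = interp (Finite.sort Q) N.

(** * Categories whose objects are the simple types (hom-sets given up to an
      equivalence relation, i.e. as setoids) *)
Record TyCat := {
  hom : ty -> ty -> Type;
  heq : forall A B, hom A B -> hom A B -> Prop;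
  idm : forall A, hom A A;
  comp : forall A B C, hom B C -> hom A B -> hom A C }.

Arguments heq {t A B}.
Arguments idm {t}.
Arguments comp {t A B C}.

Definition is_category (C : TyCat) : Prop :=
  (forall A B, Equivalence (@heq C A B)) /\
  (forall A B D (g g' : hom C B D) (f f' : hom C A B),
      heq g g' -> heq f f' -> heq (comp g f) (comp g' f')) /\
  (forall A B (f : hom C A B), heq (comp (idm B) f) f) /\
  (forall A B (f : hom C A B), heq (comp f (idm A)) f) /\
  (forall A B D E (h : hom C D E) (g : hom C B D) (f : hom C A B),
      heq (comp h (comp g f)) (comp (comp h g) f)).

Definition is_terminal (C : TyCat) (T : ty) : Prop :=
  forall X, exists f : hom C X T, forall g : hom C X T, heq g f.

Definition is_product (C : TyCat) (A B P : ty) (p1 : hom C P A) (p2 : hom C P B)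
  : Prop :=
  forall X (f : hom C X A) (g : hom C X B),
    exists h : hom C X P,
      heq (comp p1 h) f /\ heq (comp p2 h) g /\
      forall h' : hom C X P, heq (comp p1 h') f -> heq (comp p2 h') g -> heq h' h.

(* (E, ev : E x A -> B) is an exponential B^A, where (P,p1,p2) is a product
   of E and A *)
Definition is_exponential (C : TyCat) (A B E P : ty)
  (p1 : hom C P E) (p2 : hom C P A) (ev : hom C P B) : Prop :=
  is_product p1 p2 /\
  forall X Y (q1 : hom C Y X) (q2 : hom C Y A), is_product q1 q2 ->
  forall g : hom C Y B,
    exists l : hom C X E,
      (forall m : hom C Y P, heq (comp p1 m) (comp l q1) -> heq (comp p2 m) q2 ->
                            heq (comp ev m) g) /\
      (forall l' : hom C X E,
          (forall m : hom C Y P, heq (comp p1 m) (comp l' q1) ->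
                                heq (comp p2 m) q2 -> heq (comp ev m) g) ->
          heq l' l).

Definition is_ccc (C : TyCat) : Prop :=
  is_category C /\
  (exists T, is_terminal C T) /\
  (forall A B, exists P (p1 : hom C P A) (p2 : hom C P B), is_product p1 p2) /\
  (forall A B, exists E P (p1 : hom C P E) (p2 : hom C P A) (ev : hom C P B),
      is_exponential p1 p2 ev).

(** identity-on-objects functors: action on morphisms *)
Definition iofmap (C D : TyCat) := forall A B, hom C A B -> hom D A B.

Definition is_functor (C D : TyCat) (F : iofmap C D) : Prop :=
  (forall A B (f f' : hom C A B), heq f f' -> heq (F A B f) (F A B f')) /\
  (forall A, heq (F A A (idm A)) (idm A)) /\
  (forall A B E (g : hom C B E) (f : hom C A B),
      heq (F A E (comp g f)) (comp (F B E g) (F A B f))).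

Definition is_cc_functor (C D : TyCat) (F : iofmap C D) : Prop :=
  is_functor F /\
  (forall T, is_terminal C T -> is_terminal D T) /\
  (forall A B P (p1 : hom C P A) (p2 : hom C P B),
      is_product p1 p2 -> is_product (F _ _ p1) (F _ _ p2)) /\
  (forall A B E P (p1 : hom C P E) (p2 : hom C P A) (ev : hom C P B),
      is_exponential p1 p2 ev ->
      is_exponential (F _ _ p1) (F _ _ p2) (F _ _ ev)).

Definition tm_id A : tm nil (Arr A A) := Lam (vz nil A).
Definition tm_comp A B C (g : tm nil (Arr B C)) (f : tm nil (Arr A B))
  : tm nil (Arr A C) :=
  Lam (App (wk A g) (App (wk A f) (vz nil A))).

Definition Lam_cat : TyCat := {|
  hom := fun A B => tm nil (Arr A B);
  heq := fun A B M N => bheq M N;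
  idm := tm_id;
  comp := tm_comp |}.

Definition LamQ (Q : finType) : TyCat := {|
  hom := fun A B => tm nil (Arr A B);
  heq := fun A B M N => simQ Q M N;
  idm := tm_id;
  comp := tm_comp |}.

Definition piQ (Q : finType) : iofmap Lam_cat (LamQ Q) := fun A B M => M.

(* R is the graph of a partial function Q -> Q' surjective onto Q' *)
Definition partial_surjection (Q Q' : Type) (R : Q -> Q' -> Prop) : Prop :=
  (forall q a b, R q a -> R q b -> a = b) /\ (forall q', exists q, R q q').

(* Main.v *)
From Stdlib Require Import Setoid Morphisms FunctionalExtensionality Classical IndefiniteDescription.
From mathcomp Require Import all_boot.
Require Import Defs.
Set Implicit Arguments.
Unset Strict Implicit.

Lemma rename_ext G A (M : tm G A) D (r1 r2 : ren G D) :
  (forall B v, r1 B v = r2 B v) -> rename M r1 = rename M r2.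
Proof.
  revert D r1 r2; induction M; intros D r1 r2 H; simpl; f_equal; auto.
  - apply IHM; intros C [e|w]; simpl; f_equal; auto.
Qed.

Lemma rename_rename G A (M : tm G A) D (r1 : ren G D) E (r2 : ren D E) :
  rename (rename M r1) r2 = rename M (fun B v => r2 B (r1 B v)).
Proof.
  revert D r1 E r2; induction M; intros D r1 E r2; simpl; f_equal; auto.
  rewrite IHM; apply rename_ext; intros C [e|w]; reflexivity.
Qed.

Lemma subst_ext G A (M : tm G A) D (s1 s2 : sub G D) :
  (forall B v, s1 B v = s2 B v) -> subst M s1 = subst M s2.
Proof.
  revert D s1 s2; induction M; intros D s1 s2 H; simpl; f_equal; auto.
  apply IHM; intros C [e|w]; simpl; auto. rewrite H; reflexivity.
Qed.

Lemma subst_rename G A (M : tm G A) D (r : ren G D) E (s : sub D E) :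
  subst (rename M r) s = subst M (fun B v => s B (r B v)).
Proof.
  revert D r E s; induction M; intros D r E s; simpl; f_equal; auto.
  rewrite IHM; apply subst_ext; intros C [e|w]; reflexivity.
Qed.

Lemma rename_subst G A (M : tm G A) D (s : sub G D) E (r : ren D E) :
  rename (subst M s) r = subst M (fun B v => rename (s B v) r).
Proof.
  revert D s E r; induction M; intros D s E r; simpl; f_equal; auto.
  rewrite IHM; apply subst_ext; intros C [e|w]; simpl; auto.
  rewrite !rename_rename; apply rename_ext; reflexivity.
Qed.

Lemma subst_var G A (M : tm G A) D (r : ren G D) :
  subst M (fun B v => Var (r B v)) = rename M r.
Proof.
  revert D r; induction M; intros D r; simpl; f_equal; auto.
  rewrite -IHM; apply subst_ext; intros C [e|w]; reflexivity.
Qed.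

Definition null_ren D : ren nil D := fun A v => match v with end.
Definition lift D A (f : tm nil A) : tm D A := rename f (null_ren D).
Arguments lift : simpl never.

Lemma rename_closed A (f : tm nil A) D (r : ren nil D) : rename f r = lift D f.
Proof. apply rename_ext; intros B []. Qed.

Lemma subst_closed A (f : tm nil A) D (s : sub nil D) : subst f s = lift D f.
Proof.
  rewrite /lift -subst_var; apply subst_ext; intros B [].
Qed.

Lemma rename_lift A (f : tm nil A) D E (r : ren D E) : rename (lift D f) r = lift E f.
Proof. rewrite /lift rename_rename; apply rename_closed. Qed.

Lemma subst_lift A (f : tm nil A) D E (s : sub D E) : subst (lift D f) s = lift E f.
Proof. rewrite /lift subst_rename; apply subst_closed. Qed.

Lemma wk_closed A (f : tm nil A) B : wk B f = lift (B :: nil) f.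
Proof. apply rename_closed. Qed.

Lemma bheq_rename G A (M N : tm G A) : bheq M N -> forall D (r : ren G D), bheq (rename M r) (rename N r).
Proof.
  induction 1; intros D r; simpl; try (econstructor; eauto; fail).
  - replace (rename (subst M (subst1 N)) r) with
      (subst (rename M (ext_ren r A)) (subst1 (rename N r))).
    + apply be_beta.
    + rewrite rename_subst subst_rename; apply subst_ext; intros C [e|w]; simpl; auto.
      destruct e; reflexivity.
  - replace (Lam (App (rename (wk A M) (ext_ren r A)) (@Var (A :: D) A (inl erefl))))
      with (Lam (App (wk A (rename M r)) (vz D A))).
    + apply be_eta_arr.
    + f_equal. f_equal. rewrite /wk !rename_rename; apply rename_ext; reflexivity.
Qed.

#[global] Instance bheq_equiv G A : Equivalence (@bheq G A).
Proof. split; [intro; apply be_refl | intros ??; apply be_sym | intros ???; apply be_trans]. Qed.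
#[global] Instance Lam_proper G A B : Proper (@bheq (A :: G) B ==> @bheq G (Arr A B)) Lam.
Proof. intros ???; apply be_lam; auto. Qed.
#[global] Instance App_proper G A B : Proper (@bheq G (Arr A B) ==> @bheq G A ==> @bheq G B) App.
Proof. intros ?????; apply be_app; auto. Qed.
#[global] Instance Pair_proper G A B : Proper (@bheq G A ==> @bheq G B ==> @bheq G (Prod A B)) Pair.
Proof. intros ?????; apply be_pair; auto. Qed.
#[global] Instance Fst_proper G A B : Proper (@bheq G (Prod A B) ==> @bheq G A) Fst.
Proof. intros ???; apply be_fst; auto. Qed.
#[global] Instance Snd_proper G A B : Proper (@bheq G (Prod A B) ==> @bheq G B) Snd.
Proof. intros ???; apply be_snd; auto. Qed.

Definition v0 G A : tm (A :: G) A := @Var (A :: G) A (inl erefl).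
Definition v1 G A B : tm (B :: A :: G) A := @Var (B :: A :: G) A (inr (inl erefl)).

Definition bang X : tm nil (Arr X One) := Lam Star.
Definition pi1 A B : tm nil (Arr (Prod A B) A) := Lam (Fst (v0 nil (Prod A B))).
Definition pi2 A B : tm nil (Arr (Prod A B) B) := Lam (Snd (v0 nil (Prod A B))).
Definition tpair X A B (f : tm nil (Arr X A)) (g : tm nil (Arr X B)) : tm nil (Arr X (Prod A B)) :=
  Lam (Pair (App (wk X f) (v0 nil X)) (App (wk X g) (v0 nil X))).
Definition evm A B : tm nil (Arr (Prod (Arr A B) A) B) :=
  Lam (App (Fst (v0 nil _)) (Snd (v0 nil _))).
Definition cur X A B (k : tm nil (Arr (Prod X A) B)) : tm nil (Arr X (Arr A B)) :=
  Lam (Lam (App (wk A (wk X k)) (Pair (v1 nil X A) (v0 (X :: nil) A)))).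

Lemma eta_lift A B (f : tm nil (Arr A B)) : bheq (Lam (App (lift (A :: nil) f) (v0 nil A))) f.
Proof. rewrite -wk_closed. symmetry; apply be_eta_arr. Qed.

Lemma wk_lift A (f : tm nil A) D B : wk B (lift D f) = lift (B :: D) f.
Proof. apply rename_lift. Qed.

Ltac norm := cbn -[lift]; rewrite ?wk_closed ?wk_lift ?rename_lift ?subst_lift; cbn -[lift].

Lemma L_idl A B (f : tm nil (Arr A B)) : bheq (tm_comp (tm_id B) f) f.
Proof.
  rewrite /tm_comp /tm_id. norm. rewrite be_beta. norm. apply eta_lift.
Qed.

Ltac red1 := first [ rewrite be_beta | rewrite be_beta_fst | rewrite be_beta_snd ]; norm.
Ltac reds := norm; repeat red1.

Lemma L_idr A B (f : tm nil (Arr A B)) : bheq (tm_comp f (tm_id A)) f.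
Proof. rewrite /tm_comp /tm_id. reds. apply eta_lift. Qed.

Lemma L_assoc A B C D (h : tm nil (Arr C D)) (g : tm nil (Arr B C)) (f : tm nil (Arr A B)) :
  bheq (tm_comp h (tm_comp g f)) (tm_comp (tm_comp h g) f).
Proof. rewrite /tm_comp. reds. reflexivity. Qed.

Lemma L_term X (g : tm nil (Arr X One)) : bheq g (bang X).
Proof.
  rewrite /bang. etransitivity; [apply be_eta_arr|]. apply be_lam, be_eta_one.
Qed.

Lemma L_p1 X A B (f : tm nil (Arr X A)) (g : tm nil (Arr X B)) : bheq (tm_comp (pi1 A B) (tpair f g)) f.
Proof. rewrite /tm_comp /pi1 /tpair. reds. apply eta_lift. Qed.

Lemma L_p2 X A B (f : tm nil (Arr X A)) (g : tm nil (Arr X B)) : bheq (tm_comp (pi2 A B) (tpair f g)) g.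
Proof. rewrite /tm_comp /pi2 /tpair. reds. apply eta_lift. Qed.

Lemma L_pu X A B (h : tm nil (Arr X (Prod A B))) :
  bheq (tpair (tm_comp (pi1 A B) h) (tm_comp (pi2 A B) h)) h.
Proof.
  rewrite /tm_comp /pi1 /pi2 /tpair. reds. rewrite -be_eta_prod. apply eta_lift.
Qed.

Lemma L_eb X A B (k : tm nil (Arr (Prod X A) B)) :
  bheq (tm_comp (evm A B) (tpair (tm_comp (cur k) (pi1 X A)) (pi2 X A))) k.
Proof.
  rewrite /tm_comp /evm /cur /pi1 /pi2 /tpair. reds. rewrite -be_eta_prod. apply eta_lift.
Qed.

Lemma L_eu X A B (l : tm nil (Arr X (Arr A B))) :
  bheq (cur (tm_comp (evm A B) (tpair (tm_comp l (pi1 X A)) (pi2 X A)))) l.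
Proof.
  rewrite /tm_comp /evm /cur /pi1 /pi2 /tpair. reds.
  transitivity (Lam (Lam (App (wk A (App (lift (X :: nil) l) (v0 nil X))) (v0 (X :: nil) A)))).
  - norm. reflexivity.
  - rewrite -be_eta_arr. apply eta_lift.
Qed.

Lemma bh_comp A B C (g g' : tm nil (Arr B C)) (f f' : tm nil (Arr A B)) :
  bheq g g' -> bheq f f' -> bheq (tm_comp g f) (tm_comp g' f').
Proof.
  intros Hg Hf; rewrite /tm_comp /wk. apply be_lam; apply be_app; [apply bheq_rename; auto|].
  apply be_app; [apply bheq_rename; auto| reflexivity].
Qed.

Lemma bh_pair X A B (f f' : tm nil (Arr X A)) (g g' : tm nil (Arr X B)) :
  bheq f f' -> bheq g g' -> bheq (tpair f g) (tpair f' g').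
Proof.
  intros Hf Hg; rewrite /tpair /wk. apply be_lam; apply be_pair; apply be_app; try reflexivity;
  apply bheq_rename; auto.
Qed.

Lemma bh_cur X A B (k k' : tm nil (Arr (Prod X A) B)) : bheq k k' -> bheq (cur k) (cur k').
Proof.
  intros Hk; rewrite /cur /wk. apply be_lam, be_lam, be_app; [|reflexivity].
  apply bheq_rename, bheq_rename; auto.
Qed.


Section Sem.
Variable Q : Type.

Lemma eval_rename G A (M : tm G A) D (r : ren G D) (e : env Q D) (e' : env Q G) :
  (forall B v, lookup v e' = lookup (r B v) e) -> eval (rename M r) e = eval M e'.
Proof.
  revert D r e e'; induction M; intros D r e e' H; simpl.
  - symmetry; apply H.
  - apply functional_extensionality; intro x. apply IHM.
    intros C [h|w]; simpl; auto.
  - erewrite IHM1, IHM2; eauto.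
  - reflexivity.
  - erewrite IHM1, IHM2; eauto.
  - erewrite IHM; eauto.
  - erewrite IHM; eauto.
Qed.

Lemma eval_wk G A B (M : tm G A) x (e : env Q G) : eval (wk B M) ((x, e) : env Q (B :: G)) = eval M e.
Proof. apply eval_rename; reflexivity. Qed.

Lemma eval_subst G A (M : tm G A) D (s : sub G D) (e : env Q D) (e' : env Q G) :
  (forall B v, lookup v e' = eval (s B v) e) -> eval (subst M s) e = eval M e'.
Proof.
  revert D s e e'; induction M; intros D s e e' H; simpl.
  - symmetry; apply H.
  - apply functional_extensionality; intro x. apply IHM.
    intros C [h|w]; simpl; auto. rewrite H. symmetry; apply eval_wk.
  - erewrite IHM1, IHM2; eauto.
  - reflexivity.
  - erewrite IHM1, IHM2; eauto.
  - erewrite IHM; eauto.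
  - erewrite IHM; eauto.
Qed.

Lemma eval_sound G A (M N : tm G A) : bheq M N -> forall e : env Q G, eval M e = eval N e.
Proof.
  induction 1; intro e; simpl; try congruence.
  - apply functional_extensionality; intro x; auto.
  - symmetry; apply eval_subst. intros C [h|w]; simpl; auto. destruct h; reflexivity.
  - apply functional_extensionality; intro x. rewrite eval_wk; reflexivity.
  - destruct (eval M e); reflexivity.
  - destruct (eval M e); reflexivity.
Qed.
End Sem.


Arguments tm_comp : simpl never.
Arguments tm_id : simpl never.
Arguments tpair : simpl never.
Arguments cur : simpl never.
Arguments pi1 : simpl never.
Arguments pi2 : simpl never.
Arguments evm : simpl never.
Arguments bang : simpl never.

Definition mkC (E : forall T, tm nil T -> tm nil T -> Prop) : TyCat := {|
  hom := fun A B => tm nil (Arr A B);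
  heq := fun A B M N => E (Arr A B) M N;
  idm := tm_id;
  comp := tm_comp |}.

Class good (E : forall T, tm nil T -> tm nil T -> Prop) : Prop := {
  g_eq : forall T, Equivalence (E T);
  g_bh : forall T (M N : tm nil T), bheq M N -> E T M N;
  g_comp : forall A B C (g g' : tm nil (Arr B C)) (f f' : tm nil (Arr A B)),
      E _ g g' -> E _ f f' -> E _ (tm_comp g f) (tm_comp g' f');
  g_pair : forall X A B (f f' : tm nil (Arr X A)) (g g' : tm nil (Arr X B)),
      E _ f f' -> E _ g g' -> E _ (tpair f g) (tpair f' g');
  g_cur : forall X A B (k k' : tm nil (Arr (Prod X A) B)), E _ k k' -> E _ (cur k) (cur k') }.

#[global] Existing Instance g_eq.
#[global] Instance comp_proper E `{good E} A B C :
  Proper (E (Arr B C) ==> E (Arr A B) ==> E (Arr A C)) (@tm_comp A B C).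
Proof. intros ??????; apply g_comp; auto. Qed.
#[global] Instance pair_proper E `{good E} X A B :
  Proper (E (Arr X A) ==> E (Arr X B) ==> E (Arr X (Prod A B))) (@tpair X A B).
Proof. intros ??????; apply g_pair; auto. Qed.
#[global] Instance cur_proper E `{good E} X A B :
  Proper (E (Arr (Prod X A) B) ==> E (Arr X (Arr A B))) (@cur X A B).
Proof. intros ???; apply g_cur; auto. Qed.

Section Abs.
Context (E : forall T, tm nil T -> tm nil T -> Prop) `{HE : good E}.

Local Notation "g @@ f" := (tm_comp g f) (at level 40, left associativity).

Lemma E_idl A B (f : tm nil (Arr A B)) : E (tm_id B @@ f) f.
Proof. apply g_bh, L_idl. Qed.
Lemma E_idr A B (f : tm nil (Arr A B)) : E (f @@ tm_id A) f.
Proof. apply g_bh, L_idr. Qed.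
Lemma E_assoc A B C D (h : tm nil (Arr C D)) (g : tm nil (Arr B C)) (f : tm nil (Arr A B)) :
  E (h @@ (g @@ f)) (h @@ g @@ f).
Proof. apply g_bh, L_assoc. Qed.
Lemma E_term X (g : tm nil (Arr X One)) : E g (bang X).
Proof. apply g_bh, L_term. Qed.
Lemma E_p1 X A B (f : tm nil (Arr X A)) (g : tm nil (Arr X B)) : E (pi1 A B @@ tpair f g) f.
Proof. apply g_bh, L_p1. Qed.
Lemma E_p2 X A B (f : tm nil (Arr X A)) (g : tm nil (Arr X B)) : E (pi2 A B @@ tpair f g) g.
Proof. apply g_bh, L_p2. Qed.
Lemma E_pu X A B (h : tm nil (Arr X (Prod A B))) : E (tpair (pi1 A B @@ h) (pi2 A B @@ h)) h.
Proof. apply g_bh, L_pu. Qed.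
Lemma E_eb X A B (k : tm nil (Arr (Prod X A) B)) :
  E (evm A B @@ tpair (cur k @@ pi1 X A) (pi2 X A)) k.
Proof. apply g_bh, L_eb. Qed.
Lemma E_eu X A B (l : tm nil (Arr X (Arr A B))) :
  E (cur (evm A B @@ tpair (l @@ pi1 X A) (pi2 X A))) l.
Proof. apply g_bh, L_eu. Qed.

Lemma pair_uniq X A B (h : tm nil (Arr X (Prod A B))) f g :
  E (pi1 A B @@ h) f -> E (pi2 A B @@ h) g -> E h (tpair f g).
Proof. intros H1 H2. rewrite -H1 -H2. symmetry; apply E_pu. Qed.

Lemma pair_comp Y X A B (f : tm nil (Arr X A)) (g : tm nil (Arr X B)) (k : tm nil (Arr Y X)) :
  E (tpair f g @@ k) (tpair (f @@ k) (g @@ k)).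
Proof. apply pair_uniq; rewrite E_assoc ?E_p1 ?E_p2; reflexivity. Qed.

Lemma mk_cat : is_category (mkC E).
Proof.
  split; [|split; [|split; [|split]]]; cbn.
  - intros; apply g_eq.
  - intros; apply g_comp; auto.
  - intros; apply E_idl.
  - intros; apply E_idr.
  - intros; apply E_assoc.
Qed.

Lemma std_term : is_terminal (mkC E) One.
Proof. intros X; exists (bang X); intros g; cbn; apply E_term. Qed.

Lemma std_prod A B : is_product (C:=mkC E) (pi1 A B) (pi2 A B).
Proof.
  intros X f g; exists (tpair f g); cbn; split; [apply E_p1|split; [apply E_p2|]].
  intros h' H1 H2; apply pair_uniq; auto.
Qed.

Lemma std_exp A B : is_exponential (C:=mkC E) (pi1 (Arr A B) A) (pi2 (Arr A B) A) (evm A B).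
Proof.
  split; [apply std_prod|]. intros X Y r1 r2 Hprod g.
  destruct (Hprod (Prod X A) (pi1 X A) (pi2 X A)) as [K [HK1 [HK2 _]]]. cbn in HK1, HK2.
  set J := tpair r1 r2.
  have KJ : E (K @@ J) (tm_id Y).
  { destruct (Hprod Y r1 r2) as [h0 [_ [_ U]]]. cbn in U.
    transitivity h0; [|symmetry]; apply U.
    - rewrite E_assoc HK1 /J E_p1; reflexivity.
    - rewrite E_assoc HK2 /J E_p2; reflexivity.
    - apply E_idr.
    - apply E_idr. }
  exists (cur (g @@ K)); cbn; split.
  - intros m Hm1 Hm2.
    have -> : E m (tpair (cur (g @@ K) @@ pi1 X A) (pi2 X A) @@ J).
    { rewrite pair_comp -E_assoc /J E_p1 E_p2. apply pair_uniq; auto. }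
    rewrite E_assoc E_eb -E_assoc KJ E_idr; reflexivity.
  - intros l' Hl'.
    have H := Hl' (tpair (l' @@ r1) r2) (E_p1 _ _) (E_p2 _ _).
    rewrite -[l' in E l' _]E_eu. apply g_cur.
    rewrite -H -E_assoc pair_comp -E_assoc HK1 HK2. reflexivity.
Qed.

Lemma mk_ccc : is_ccc (mkC E).
Proof.
  split; [apply mk_cat|split; [exists One; apply std_term|split]].
  - intros A B; exists (Prod A B), (pi1 A B), (pi2 A B); apply std_prod.
  - intros A B; exists (Arr A B), (Prod (Arr A B) A), (pi1 (Arr A B) A), (pi2 (Arr A B) A), (evm A B).
    apply std_exp.
Qed.
End Abs.


Section Tr.
Context (E1 E2 : forall T, tm nil T -> tm nil T -> Prop) `{H1 : good E1} `{H2 : good E2}.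
Hypothesis H12 : forall T (M N : tm nil T), E1 M N -> E2 M N.

Local Notation E_assoc_1 := (@E_assoc E1 _).
Local Notation E_assoc_2 := (@E_assoc E2 _).
Local Notation E_p1_1 := (@E_p1 E1 _).
Local Notation E_p1_2 := (@E_p1 E2 _).
Local Notation E_p2_1 := (@E_p2 E1 _).
Local Notation E_p2_2 := (@E_p2 E2 _).
Local Notation E_idl_1 := (@E_idl E1 _).
Local Notation E_idl_2 := (@E_idl E2 _).
Local Notation E_idr_1 := (@E_idr E1 _).
Local Notation E_idr_2 := (@E_idr E2 _).
Local Notation E_eb_1 := (@E_eb E1 _).
Local Notation E_eb_2 := (@E_eb E2 _).
Local Notation E_eu_1 := (@E_eu E1 _).
Local Notation E_eu_2 := (@E_eu E2 _).
Local Notation E_term_1 := (@E_term E1 _).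
Local Notation E_term_2 := (@E_term E2 _).
Local Notation pair_comp_1 := (@pair_comp E1 _).
Local Notation pair_comp_2 := (@pair_comp E2 _).
Local Notation pair_uniq_1 := (@pair_uniq E1 _).
Local Notation pair_uniq_2 := (@pair_uniq E2 _).
Local Notation "g @@ f" := (tm_comp g f) (at level 40, left associativity).

Lemma tr_functor : is_functor (C:=mkC E1) (D:=mkC E2) (fun A B M => M).
Proof.
  split; [|split]; cbn; intros; [apply H12; auto | reflexivity | reflexivity].
Qed.

Lemma tr_term T : is_terminal (mkC E1) T -> is_terminal (mkC E2) T.
Proof.
  intros HT X. destruct (HT One) as [j Hj]. destruct (HT T) as [f1 Hf1]. cbn in *.
  have JI : E1 (j @@ bang T) (tm_id T) by transitivity f1; [|symmetry]; apply Hf1.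
  exists (j @@ bang X). intros g; cbn.
  rewrite -[g in E2 g _](E_idl_2 ) -(H12 JI) -E_assoc_2 (E_term_2  (bang T @@ g)).
  reflexivity.
Qed.

Lemma prod_iso A B P (p1 : tm nil (Arr P A)) (p2 : tm nil (Arr P B)) :
  is_product (C:=mkC E1) p1 p2 ->
  exists j, E1 (p1 @@ j) (pi1 A B) /\ E1 (p2 @@ j) (pi2 A B) /\ E1 (j @@ tpair p1 p2) (tm_id P).
Proof.
  intros HP. destruct (HP _ (pi1 A B) (pi2 A B)) as [j [Hj1 [Hj2 _]]]. cbn in *.
  exists j; split; [auto|split; [auto|]].
  destruct (HP P p1 p2) as [h0 [_ [_ U]]]. cbn in U.
  transitivity h0; [|symmetry]; apply U.
  - rewrite E_assoc_1 Hj1 E_p1_1; reflexivity.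
  - rewrite E_assoc_1 Hj2 E_p2_1; reflexivity.
  - apply E_idr_1.
  - apply E_idr_1.
Qed.

Lemma tr_prod A B P (p1 : tm nil (Arr P A)) (p2 : tm nil (Arr P B)) :
  is_product (C:=mkC E1) p1 p2 -> is_product (C:=mkC E2) p1 p2.
Proof.
  intros HP. destruct (prod_iso HP) as [j [Hj1 [Hj2 JI]]].
  apply H12 in Hj1, Hj2, JI.
  intros X f g. exists (j @@ tpair f g); cbn. split; [|split].
  - rewrite E_assoc_2 Hj1 E_p1_2; reflexivity.
  - rewrite E_assoc_2 Hj2 E_p2_2; reflexivity.
  - intros h' Hh1 Hh2.
    have Hi : E2 (tpair p1 p2 @@ h') (tpair f g).
    { apply pair_uniq_2; rewrite E_assoc_2 ?E_p1_2 ?E_p2_2; auto. }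
    rewrite -Hi E_assoc_2 JI E_idl_2; reflexivity.
Qed.

Lemma tr_exp A B EE P (p1 : tm nil (Arr P EE)) (p2 : tm nil (Arr P A)) (ev : tm nil (Arr P B)) :
  is_exponential (C:=mkC E1) p1 p2 ev -> is_exponential (C:=mkC E2) p1 p2 ev.
Proof.
  intros [HP Hx].
  destruct (prod_iso HP) as [j [Hj1 [Hj2 JI]]].
  set u := cur (ev @@ j).
  destruct (Hx (Arr A B) (Prod (Arr A B) A) (pi1 _ _) (pi2 _ _) (@std_prod E1 _ _ _) (evm A B))
    as [u' [Hu' _]]. cbn in Hu'.
  set m2 := j @@ tpair (u' @@ pi1 (Arr A B) A) (pi2 (Arr A B) A).
  have M2a : E1 (p1 @@ m2) (u' @@ pi1 (Arr A B) A) by rewrite /m2 E_assoc_1 Hj1 E_p1_1; reflexivity.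
  have M2b : E1 (p2 @@ m2) (pi2 (Arr A B) A) by rewrite /m2 E_assoc_1 Hj2 E_p2_1; reflexivity.
  have M2c : E1 (ev @@ m2) (evm A B) by apply Hu'.
  have Evc : E1 ev (evm A B @@ tpair (u @@ p1) p2).
  { have -> : E1 (tpair (u @@ p1) p2) (tpair (u @@ pi1 EE A) (pi2 EE A) @@ tpair p1 p2).
    { rewrite pair_comp_1 -E_assoc_1 E_p1_1 E_p2_1; reflexivity. }
    rewrite E_assoc_1 /u E_eb_1 -E_assoc_1 JI E_idr_1; reflexivity. }
  have UU' : E1 (u' @@ u) (tm_id EE).
  { destruct (Hx EE P p1 p2 HP ev) as [l0 [_ U]]. cbn in U.
    destruct (HP P p1 p2) as [h0 [_ [_ UP]]]. cbn in UP.
    transitivity l0; [|symmetry]; apply U.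
    - intros m Hm1 Hm2.
      set n := tpair (u @@ p1) p2.
      have -> : E1 m (m2 @@ n).
      { destruct (HP P (u' @@ u @@ p1) p2) as [h1 [_ [_ UP1]]]. cbn in UP1.
        transitivity h1; [|symmetry]; apply UP1; auto.
        - rewrite E_assoc_1 M2a -E_assoc_1 /n E_p1_1 E_assoc_1; reflexivity.
        - rewrite E_assoc_1 M2b /n E_p2_1; reflexivity. }
      rewrite E_assoc_1 M2c -Evc; reflexivity.
    - intros m Hm1 Hm2.
      have -> : E1 m (tm_id P).
      { transitivity h0; [|symmetry]; apply UP; auto.
        - rewrite Hm1 E_idl_1; reflexivity.
        - apply E_idr_1.
        - apply E_idr_1. }
      apply E_idr_1. }
  have UU : E1 (u @@ u') (tm_id (Arr A B)).
  { transitivity (cur (evm A B @@ tpair ((u @@ u') @@ pi1 (Arr A B) A) (pi2 (Arr A B) A)));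
      [symmetry; apply E_eu_1|].
    transitivity (cur (evm A B @@ tpair (tm_id _ @@ pi1 (Arr A B) A) (pi2 (Arr A B) A)));
      [|apply E_eu_1].
    apply g_cur.
    have -> : E1 (tpair (u @@ u' @@ pi1 (Arr A B) A) (pi2 (Arr A B) A))
                 (tpair (u @@ p1) p2 @@ m2).
    { rewrite pair_comp_1 -(E_assoc (E:=E1) u p1 m2) M2a M2b E_assoc_1; reflexivity. }
    rewrite E_assoc_1 -Evc M2c E_idl_1.
    have -> : E1 (tpair (pi1 (Arr A B) A) (pi2 (Arr A B) A)) (tm_id _).
    { symmetry; apply pair_uniq_1; apply E_idr_1. }
    rewrite E_idr_1; reflexivity. }
  apply H12 in M2a, M2b, M2c, Evc, UU', UU.
  split; [apply tr_prod; auto|].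
  intros X Y r1 r2 Hprod g.
  destruct (proj2 (@std_exp E2 _ A B) X Y r1 r2 Hprod g) as [l0 [Hl0 Ul0]]. cbn in Hl0, Ul0.
  exists (u' @@ l0); cbn; split.
  - intros m Hm1 Hm2. rewrite Evc -E_assoc_2. apply Hl0.
    + rewrite E_assoc_2 E_p1_2 -E_assoc_2 Hm1 E_assoc_2 E_assoc_2 UU E_idl_2; reflexivity.
    + rewrite E_assoc_2 E_p2_2; auto.
  - intros l' Hl'.
    have Hul : E2 (u @@ l') l0.
    { apply Ul0. intros n Hn1 Hn2.
      have Hm := Hl' (m2 @@ n).
      rewrite -M2c -E_assoc_2. apply Hm.
      - rewrite E_assoc_2 M2a -E_assoc_2 Hn1 E_assoc_2 E_assoc_2 UU' E_idl_2; reflexivity.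
      - rewrite E_assoc_2 M2b; auto. }
    rewrite -[l' in E2 l' _](E_idl_2 ) -UU' -E_assoc_2 Hul; reflexivity.
Qed.

Lemma tr_cc : is_cc_functor (C:=mkC E1) (D:=mkC E2) (fun A B M => M).
Proof.
  split; [apply tr_functor|split; [apply tr_term|split]].
  - intros A B P p1 p2; apply tr_prod.
  - intros A B EE P p1 p2 ev; apply tr_exp.
Qed.
End Tr.


Definition bhE : forall T, tm nil T -> tm nil T -> Prop := fun T M N => bheq M N.
#[global] Instance bh_good : good bhE.
Proof.
  split.
  - intro T; apply bheq_equiv.
  - intros T M N H; exact H.
  - intros; apply bh_comp; auto.
  - intros; apply bh_pair; auto.
  - intros; apply bh_cur; auto.
Qed.

Section SemQ.
Variable Q : Type.
Lemma ev_comp A B C (g : tm nil (Arr B C)) (f : tm nil (Arr A B)) :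
  eval (Q:=Q) (tm_comp g f) tt = fun x => eval g tt (eval f tt x).
Proof.
  rewrite /tm_comp /=. apply functional_extensionality; intro x. rewrite !eval_wk; reflexivity.
Qed.
Lemma ev_pair X A B (f : tm nil (Arr X A)) (g : tm nil (Arr X B)) :
  eval (Q:=Q) (tpair f g) tt = fun x => (eval f tt x, eval g tt x).
Proof.
  rewrite /tpair /=. apply functional_extensionality; intro x. rewrite !eval_wk; reflexivity.
Qed.
Lemma ev_cur X A B (k : tm nil (Arr (Prod X A) B)) :
  eval (Q:=Q) (cur k) tt = fun x y => eval k tt (x, y).
Proof.
  rewrite /cur /=. apply functional_extensionality; intro x.
  apply functional_extensionality; intro y. rewrite !eval_wk; reflexivity.
Qed.
End SemQ.

Definition sE (Q : finType) : forall T, tm nil T -> tm nil T -> Prop := fun T M N => simQ Q M N.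
#[global] Instance sE_good Q : good (sE Q).
Proof.
  rewrite /sE /simQ /interp; split.
  - intro T; split; [intros ?; reflexivity|intros ???; symmetry; auto|intros ?????; etransitivity; eauto].
  - intros T M N H; apply eval_sound; exact H.
  - intros A B C g g' f f' Hg Hf; rewrite !ev_comp Hg Hf; reflexivity.
  - intros X A B f f' g g' Hf Hg; rewrite !ev_pair Hf Hg; reflexivity.
  - intros X A B k k' Hk; rewrite !ev_cur Hk; reflexivity.
Qed.

Section LRel.
Local Unset Implicit Arguments.
Variables (Q Q' : Type) (R : Q -> Q' -> Prop).
Hypothesis Rfun : forall q a b, R q a -> R q b -> a = b.
Hypothesis Rsur : forall q', exists q, R q q'.

Fixpoint LR (T : ty) : sem Q T -> sem Q' T -> Prop :=
  match T return sem Q T -> sem Q' T -> Prop with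
  | Base => fun x y => R x y
  | One => fun _ _ => True
  | Prod A B => fun p p' => LR A p.1 p'.1 /\ LR B p.2 p'.2
  | Arr A B => fun f f' => forall x x', LR A x x' -> LR B (f x) (f' x')
  end.

Fixpoint dflt (q0 : Q) (T : ty) : sem Q T :=
  match T return sem Q T with
  | Base => q0
  | One => tt
  | Prod A B => (dflt q0 A, dflt q0 B)
  | Arr A B => fun _ => dflt q0 B
  end.

Fixpoint hk (nQ : Q -> False) (nQ' : Q' -> False) (T : ty) :
  (sem Q T -> sem Q' T) * (sem Q' T -> sem Q T) :=
  match T return (sem Q T -> sem Q' T) * (sem Q' T -> sem Q T) with
  | Base => (fun q => False_rect _ (nQ q), fun q => False_rect _ (nQ' q))
  | One => (fun _ => tt, fun _ => tt)
  | Prod A B => (fun p => ((hk nQ nQ' A).1 p.1, (hk nQ nQ' B).1 p.2),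
                 fun p => ((hk nQ nQ' A).2 p.1, (hk nQ nQ' B).2 p.2))
  | Arr A B => (fun f x => (hk nQ nQ' B).1 (f ((hk nQ nQ' A).2 x)),
                fun f x => (hk nQ nQ' B).2 (f ((hk nQ nQ' A).1 x)))
  end.

Lemma inh_fun A B (f' : sem Q' A -> sem Q' B) : inhabited (sem Q A -> sem Q B).
Proof.
  destruct (classic (inhabited Q)) as [[q0]|nQ].
  - constructor; exact (fun _ => dflt q0 B).
  - have nQ1 : Q -> False by intro q; apply nQ; constructor; exact q.
    have nQ2 : Q' -> False by intro q'; destruct (Rsur q') as [q _]; auto.
    constructor; exact (fun x => (hk nQ1 nQ2 B).2 (f' ((hk nQ1 nQ2 A).1 x))).
Qed.

Lemma LR_ps T : (forall x y y', LR T x y -> LR T x y' -> y = y') /\ (forall y', exists x, LR T x y').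
Proof.
  induction T as [| |A IHA B IHB|A IHA B IHB]; simpl.
  - split; [exact Rfun|exact Rsur].
  - split; [intros ? [] [] _ _; reflexivity|intros _; exists tt; exact I].
  - destruct IHA as [FA SA], IHB as [FB SB]. split.
    + intros [x1 x2] [y1 y2] [z1 z2] [H1 H2] [H3 H4]; simpl in *. f_equal; eauto.
    + intros [y1 y2]. destruct (SA y1) as [x1 ?], (SB y2) as [x2 ?]. exists (x1, x2); simpl; auto.
  - destruct IHA as [FA SA], IHB as [FB SB]. split.
    + intros f g g' Hg Hg'. apply functional_extensionality; intro a'.
      destruct (SA a') as [a Ha]. eapply FB; [apply Hg|apply Hg']; exact Ha.
    + intros f'. destruct (inh_fun A B f') as [d].
      have Hc : forall x, exists y, forall x', LR A x x' -> LR B y (f' x').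
      { intro x. destruct (classic (exists x', LR A x x')) as [[x0 H0]|Hn].
        - destruct (SB (f' x0)) as [y Hy]. exists y. intros x' Hx'.
          rewrite (FA _ _ _ Hx' H0); exact Hy.
        - exists (d x). intros x' Hx'; exfalso; apply Hn; exists x'; exact Hx'. }
      destruct (functional_choice _ Hc) as [f Hf]. exists f. intros x x' Hx; apply Hf; exact Hx.
Qed.

Fixpoint envR (G : list ty) : env Q G -> env Q' G -> Prop :=
  match G return env Q G -> env Q' G -> Prop with
  | nil => fun _ _ => True
  | A :: G => fun e e' => LR A e.1 e'.1 /\ envR G e.2 e'.2
  end.

Lemma lookup_LR G A (v : var G A) e e' : envR G e e' -> LR A (lookup v e) (lookup v e').
Proof.
  revert A v e e'; induction G as [|B G IH]; intros A v e e' H; [destruct v|].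
  destruct v as [h|w]; simpl.
  - destruct h; simpl; apply H.
  - apply IH; apply H.
Qed.

Lemma fundamental G A (M : tm G A) e e' : envR G e e' -> LR A (eval M e) (eval M e').
Proof.
  revert e e'; induction M; intros e e' H; simpl.
  - apply lookup_LR; auto.
  - intros x x' Hx; apply IHM; simpl; auto.
  - exact (IHM1 e e' H _ _ (IHM2 e e' H)).
  - exact I.
  - split; auto.
  - apply (IHM e e' H).
  - apply (IHM e e' H).
Qed.

Lemma interp_transfer A (M N : tm nil A) :
  interp Q M = interp Q N -> interp Q' M = interp Q' N.
Proof.
  intros H. have HM := @fundamental nil A M tt tt I.
  have HN := @fundamental nil A N tt tt I.
  rewrite /interp in H *. rewrite H in HM. eapply (proj1 (LR_ps A)); eauto.
Qed.
End LRel.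

Unset Implicit Arguments.

Theorem mainTheorem9 :
  (forall Q : finType, is_ccc (LamQ Q) /\ is_cc_functor (piQ Q)) /\
  (forall (Q Q' : finType) (R : Q -> Q' -> Prop),
      partial_surjection R ->
      exists F : iofmap (LamQ Q) (LamQ Q'),
        is_cc_functor F /\
        forall A B (M : hom Lam_cat A B),
          heq (F A B (piQ Q M)) (piQ Q' M)).
Proof.
  split.
  - intro Q. split.
    + change (is_ccc (mkC (sE Q))). apply mk_ccc; exact _.
    + change (is_cc_functor (C:=mkC bhE) (D:=mkC (sE Q)) (fun A B M => M)).
      apply tr_cc; try exact _.
      intros T M N H; apply eval_sound; exact H.
  - intros Q Q' R [Rf Rs]. exists (fun A B M => M). split.
    + change (is_cc_functor (C:=mkC (sE Q)) (D:=mkC (sE Q')) (fun A B M => M)).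
      apply tr_cc; try exact _.
      intros T M N H. exact (@interp_transfer _ _ R Rf Rs T M N H).
    + intros A B M. reflexivity.
Qed.
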